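(* If $G$ is a connected bipartite graph of order $n$ with minimum degree $1$, then ${\rm I}_e(G)\le n-1$.
   Context: All graphs are finite and simple. A graph is locally irregular if no two adjacent vertices have the same degree. An edge-irregulator of a graph $G$ is a set $S\subseteq E(G)$ such that $G-S$ is locally irregular; ${\rm I}_e(G)$ is the minimum cardinality of an edge-irregulator of $G$. *)

(* Defs.v *)
From mathcomp Require Import all_boot.
Set Implicit Arguments. Unset Strict Implicit. Unset Printing Implicit Defensive.

Definition simple_graph (T : finType) (e : rel T) : Prop :=
  symmetric e /\ irreflexive e.

Definition edges (T : finType) (e : rel T) : {set {set T}} :=
  [set E : {set T} | [exists x, exists y, e x y && (E == [set x; y])]].

Definition del_edges (T : finType) (e : rel T) (S : {set {set T}}) : rel T :=
  fun x y => e x y && ([set x; y] \notin S).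

Definition deg (T : finType) (e : rel T) (x : T) : nat := #|[set y | e x y]|.

Definition locally_irregular (T : finType) (e : rel T) : bool :=
  [forall x, forall y, e x y ==> (deg e x != deg e y)].

Definition edge_irregulator (T : finType) (e : rel T) (S : {set {set T}}) : bool :=
  (S \subset edges e) && locally_irregular (del_edges e S).

Lemma edge_irregulator_exists (T : finType) (e : rel T) :
  exists k, [exists S : {set {set T}}, edge_irregulator e S && (#|S| == k)].
Proof.
exists #|edges e|; apply/existsP; exists (edges e).
rewrite eqxx andbT /edge_irregulator subxx /=.
apply/forallP => x; apply/forallP => y; apply/implyP.
rewrite /del_edges => /andP [exy]; case/negP.
rewrite inE; apply/existsP; exists x; apply/existsP; exists y; by rewrite exy eqxx.
Qed.

Definition Ie (T : finType) (e : rel T) : nat :=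
  ex_minn (edge_irregulator_exists e).

Definition connected_graph (T : finType) (e : rel T) : Prop :=
  forall x y : T, connect e x y.

Definition bipartite (T : finType) (e : rel T) : Prop :=
  exists A : {set T}, forall x y, e x y -> (x \in A) != (y \in A).

Definition min_degree_is (T : finType) (e : rel T) (d : nat) : Prop :=
  (exists x, deg e x = d) /\ (forall x, d <= deg e x).

(* Main.v *)
Require Import Defs.
From mathcomp Require Import all_boot.
Set Implicit Arguments. Unset Strict Implicit. Unset Printing Implicit Defensive.
From mathcomp Require Import zify.

Section Aux.
Variable T : finType.
Variable e : rel T.
Hypothesis esym : symmetric e.
Hypothesis eirr : irreflexive e.

Definition dF (F : {set {set T}}) x := #|[set y | e x y && ([set x; y] \in F)]|.

Definition Good (r : T) (R : {set T}) := r \in R /\ forall p : T -> bool,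
  exists F : {set {set T}}, [/\ F \subset edges e, #|F| < #|R|,
    (forall E, E \in F -> E \subset R) &
    forall x, x \in R -> x != r -> odd (dF F x) = p x].

Lemma good1 r : Good r [set r].
Proof.
split; first by rewrite inE.
move=> p; exists set0; split.
- exact: sub0set.
- by rewrite cards0 cards1.
- by move=> E; rewrite inE.
- by move=> x; rewrite inE => ->.
Qed.

Lemma dF_out (F : {set {set T}}) (R : {set T}) (v : T) : (forall E, E \in F -> E \subset R) -> v \notin R -> dF F v = 0.
Proof.
move=> HF vR; apply/eqP; rewrite cards_eq0; apply/eqP/setP => y; rewrite !inE.
case: (boolP ([set v; y] \in F)) => [H|_]; last by rewrite andbF.
have := subsetP (HF _ H) v.
by rewrite !inE eqxx /= => /(_ isT) H2; rewrite H2 in vR.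
Qed.

Lemma grow (r : T) (R : {set T}) (u v : T) : Good r R -> u \in R -> v \notin R -> e u v -> Good r (v |: R).
Proof.
move=> [rR HR] uR vR euv; split; first by rewrite inE rR orbT.
have uv : u != v by apply/eqP => E; rewrite E in uR; rewrite uR in vR.
move=> p.
pose p' := fun x => if (x == u) && p v then ~~ p u else p x.
have [F [FE FR FS Fp]] := HR p'.
have dFv : dF F v = 0 by exact: dF_out FS vR.
have cardR : #|v |: R| = #|R|.+1 by rewrite cardsU1 vR.
case pv : (p v).
- exists ([set u; v] |: F); split.
  + apply/subsetP => E; rewrite in_setU1 => /orP [/eqP ->|]; last by apply/subsetP.
    rewrite inE; apply/existsP; exists u; apply/existsP; exists v; by rewrite euv eqxx.
  + rewrite cardR cardsU1 ltnS.
    by case: (_ \notin _); [rewrite add1n | rewrite add0n ltnW].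
  + move=> E; rewrite in_setU1 => /orP [/eqP ->|/FS H].
    * apply/subsetP => y; rewrite !inE => /orP [/eqP ->|->]; last by [].
      by rewrite uR orbT.
    * by apply: subset_trans H (subsetUr _ _).
  + have uvF : [set u; v] \notin F.
      apply/negP => H; have := subsetP (FS _ H) v; rewrite !inE eqxx orbT => /(_ isT) H2.
      by rewrite H2 in vR.
    move=> x; rewrite inE => xR xr.
    rewrite /dF.
    case: (eqVneq x v) => [->|xv].
    * have -> : [set y | e v y && ([set v; y] \in [set u; v] |: F)] = [set u].
        apply/setP => y; rewrite !inE.
        case: (eqVneq y u) => [->|yu]; first by rewrite esym euv setUC eqxx.
        case: (boolP (e v y)) => //= evy.
        case: (eqVneq [set v; y] [set u; v]) => [H|_] /=.
          have : y \in [set u; v] by rewrite -H !inE eqxx orbT.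
          rewrite !inE (negPf yu) /= => /eqP yv; by rewrite yv eirr in evy.
        apply/negP => H; have := subsetP (FS _ H) v; rewrite !inE eqxx /= => /(_ isT) H2.
        by rewrite H2 in vR.
      by rewrite cards1 pv.
    * move: xR; rewrite inE (negPf xv) /= => xR.
      case: (eqVneq x u) => [xu|xu].
      - subst x.
        have -> : [set y | e u y && ([set u; y] \in [set u; v] |: F)] =
                  v |: [set y | e u y && ([set u; y] \in F)].
          apply/setP => y; rewrite !inE.
          case: (eqVneq y v) => [->|yv]; first by rewrite euv eqxx.
          case: (boolP (e u y)) => //= euy.
          case: (eqVneq [set u; y] [set u; v]) => [H|_] //=.
          have : y \in [set u; v] by rewrite -H !inE eqxx orbT.
          rewrite !inE (negPf yv) orbF => /eqP yu; by rewrite yu eirr in euy.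
        rewrite cardsU1 inE euv (negPf uvF) /= /=.
        have := Fp u uR xr; rewrite /p' eqxx pv /= => ->.
        by rewrite negbK.
      - have -> : [set y | e x y && ([set x; y] \in [set u; v] |: F)] =
                  [set y | e x y && ([set x; y] \in F)].
          apply/setP => y; rewrite !inE.
          case: (eqVneq [set x; y] [set u; v]) => [H|_] //=.
          have : x \in [set u; v] by rewrite -H !inE eqxx.
          by rewrite !inE (negPf xu) (negPf xv).
        by have := Fp x xR xr; rewrite /p' (negPf xu).
- exists F; split => //.
  + by rewrite cardR ltnS ltnW.
  + by move=> E /FS H; apply: subset_trans H (subsetUr _ _).
  + move=> x; rewrite in_setU1 => /orP [/eqP ->|xR] xr; first by rewrite dFv pv.
    by have := Fp x xR xr; rewrite /p' pv andbF.
Qed.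

Lemma crossing (r y : T) (R : {set T}) : r \in R -> y \notin R -> connect e r y ->
  exists u v, [/\ u \in R, v \notin R & e u v].
Proof.
move=> rR yR /connectP [s].
elim: s r rR => [|z s IH] r rR /=.
  by move=> _ E; rewrite E rR in yR.
move=> /andP [erz pz] ly.
case: (boolP (z \in R)) => zR; last by exists r, z.
exact: IH pz ly.
Qed.

Lemma good_all r : (forall x y, connect e x y) -> Good r [set: T].
Proof.
move=> conn.
suff H : forall k, k < #|T| -> exists R, Good r R /\ k < #|R|.
  have T0 : 0 < #|T| by apply/card_gt0P; exists r.
  have [R [GR kR]] : exists R, Good r R /\ #|T|.-1 < #|R|.
    by apply: H; rewrite prednK.
  rewrite prednK // in kR.
  suff -> : [set: T] = R by [].
  apply/eqP; rewrite eq_sym eqEcard subsetT cardsT; exact: kR.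
elim=> [|k IH] kT.
  by exists [set r]; split; [exact: good1 | rewrite cards1].
have [R [GR kR]] := IH (ltnW kT).
case: (ltnP k.+1 #|R|) => h; first by exists R.
have eR : #|R| = k.+1 by apply/eqP; rewrite eqn_leq h kR.
have [y yR] : exists y, y \notin R.
  apply/existsP; rewrite -(negbK [exists y, _]) negb_exists; apply/negP => /forallP Hall.
  have eq : R = [set: T].
    by apply/setP => z; rewrite inE; have := Hall z; rewrite negbK.
  by move: kT; rewrite -eR eq cardsT ltnn.
have [u [v [uR vR euv]]] := crossing (proj1 GR) yR (conn r y).
exists (v |: R); split; first exact: grow GR uR vR euv.
by rewrite cardsU1 vR eR.
Qed.

End Aux.

Theorem theorem6 (T : finType) (e : rel T) (n : nat) :
  simple_graph e -> connected_graph e -> bipartite e ->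
  #|T| = n -> min_degree_is e 1 ->
  Ie e <= n - 1.
Proof.
move=> [esym eirr] conn [A bip] <- [[v0 dv0] _].
pose tgt x := (x \in A) == (v0 \in A).
pose p x := odd (deg e x) (+) tgt x.
have [_ H] := good_all esym eirr v0 conn.
have [F [FE FR _ Fp]] := H p.
have degdel : forall x, deg (del_edges e F) x = deg e x - dF e F x.
  move=> x; rewrite /deg /dF -(cardsID [set y | [set x; y] \in F] [set y | e x y]).
  have -> : [set y | e x y] :&: [set y | [set x; y] \in F] =
            [set y | e x y && ([set x; y] \in F)] by apply/setP => y; rewrite !inE.
  rewrite addKn; apply: eq_card => y; rewrite !inE /del_edges.
  by rewrite andbC.
have dFle : forall x, dF e F x <= deg e x.
  move=> x; apply: subset_leq_card; apply/subsetP => y; rewrite !inE => /andP [].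
  by [].
have parity : forall x, x != v0 -> odd (deg (del_edges e F) x) = tgt x.
  move=> x xv; rewrite degdel oddB ?dFle // (Fp x (in_setT x) xv) /p.
  by case: (odd _); case: (tgt x).
have delsym : forall x y, del_edges e F x y -> del_edges e F y x.
  by move=> x y; rewrite /del_edges esym setUC.
have dv : forall y, del_edges e F v0 y -> deg (del_edges e F) v0 = 1.
  move=> y hy; apply/eqP; rewrite eqn_leq; apply/andP; split.
    rewrite -dv0 /deg; apply: subset_leq_card; apply/subsetP => z.
    by rewrite !inE /del_edges => /andP [].
  by rewrite /deg card_gt0; apply/set0Pn; exists y; rewrite inE.
have card : #|F| <= #|T| - 1 by move: FR; rewrite cardsT; lia.
rewrite /Ie; case: ex_minnP => m _ Hmin.
apply: leq_trans card; apply: Hmin.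
apply/existsP; exists F; rewrite eqxx andbT /edge_irregulator FE /=.
apply/forallP => x; apply/forallP => y; apply/implyP => hxy.
have exy : e x y by move: hxy; rewrite /del_edges => /andP [].
have bxy := bip x y exy.
case: (eqVneq x v0) => [xv|xv]; case: (eqVneq y v0) => [yv|yv].
- by move: exy; rewrite xv yv eirr.
- subst x; rewrite (dv y hxy); apply/eqP => E.
  have := parity y yv; rewrite -E /tgt.
  by move: bxy; case: (y \in A); case: (v0 \in A).
- subst y; rewrite (dv x (delsym _ _ hxy)); apply/eqP => E.
  have := parity x xv; rewrite E /tgt.
  by move: bxy; case: (x \in A); case: (v0 \in A).
- apply/eqP => E; have := parity x xv; rewrite E parity // /tgt.
  by move: bxy; case: (x \in A); case: (y \in A); case: (v0 \in A).
Qed.
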